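(* Let $\mathcal{C}$ be an additive category and $n\geq 1$ an integer. Suppose given a commutative diagram in $\mathcal{C}$ $$\begin{array}{ccccccccccc} A_0 & \xrightarrow{f_0} & A_1 & \xrightarrow{f_1} & A_2 & \xrightarrow{f_2} & \cdots & \xrightarrow{f_{n-1}} & A_n & \xrightarrow{f_n} & A_{n+1}\\ \| & & \downarrow{\scriptstyle h_1} & & \downarrow{\scriptstyle h_2} & & & & \downarrow{\scriptstyle h_n} & & \downarrow{\scriptstyle h_{n+1}}\\ A_0 & \xrightarrow{g_0} & B_1 & \xrightarrow{g_1} & B_2 & \xrightarrow{g_2} & \cdots & \xrightarrow{g_{n-1}} & B_n & \xrightarrow{g_n} & B_{n+1} \end{array}$$ (the leftmost vertical map is $1_{A_0}$, and all squares commute: $g_0=h_1f_0$ and $h_{i+1}f_i=g_ih_i$ for $1\le i\le n$) whose two rows are right $n$-exact sequences. Then the sequence $$A_1\xrightarrow{d_0} A_2\oplus B_1\xrightarrow{d_1} A_3\oplus B_2\xrightarrow{d_2}\cdots\xrightarrow{d_{n-1}}A_{n+1}\oplus B_{n}\xrightarrow{d_{n}}B_{n+1}$$ is right $n$-exact, where $d_0=\begin{pmatrix}-f_1\\ h_1\end{pmatrix}$, $d_i=\begin{pmatrix}-f_{i+1} & 0\\ h_{i+1} & g_i\end{pmatrix}$ for $i=1,\dots,n-1$, and $d_n=(h_{n+1}\ \ g_n)$. (In other words, the diagram obtained by deleting the first column is an $n$-pushout diagram.)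
   Context: Let $f:A\to B$ be a morphism in an additive category. A weak cokernel of $f$ is a morphism $g:B\to C$ with $gf=0$ such that for every $h:B\to D$ with $hf=0$ there exists a (not necessarily unique) $k:C\to D$ with $h=kg$. For a positive integer $n$, a sequence $A_0\xrightarrow{f_0}A_1\xrightarrow{f_1}\cdots\xrightarrow{f_n}A_{n+1}$ is called right $n$-exact (and $(f_1,\dots,f_n)$ is called an $n$-cokernel of $f_0$) if for each $k=1,\dots,n-1$ the morphism $f_k$ is a weak cokernel of $f_{k-1}$, and $f_n$ is a cokernel of $f_{n-1}$. *)

(* Defs.v *)
From mathcomp Require Import all_boot ssralg.
Set Implicit Arguments. Unset Strict Implicit. Unset Printing Implicit Defensive.
Import GRing.Theory.
Local Open Scope ring_scope.

Record preadditive := PreAdditive {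
  Ob :> Type;
  Mor : Ob -> Ob -> zmodType;
  cmp : forall a b c : Ob, Mor b c -> Mor a b -> Mor a c;
  idm : forall a : Ob, Mor a a;
  comp_assoc : forall a b c d (h : Mor c d) (g : Mor b c) (f : Mor a b),
      cmp h (cmp g f) = cmp (cmp h g) f;
  comp_id_l : forall a b (f : Mor a b), cmp (idm b) f = f;
  comp_id_r : forall a b (f : Mor a b), cmp f (idm a) = f;
  comp_addl : forall a b c (g1 g2 : Mor b c) (f : Mor a b),
      cmp (g1 + g2) f = cmp g1 f + cmp g2 f;
  comp_addr : forall a b c (g : Mor b c) (f1 f2 : Mor a b),
      cmp g (f1 + f2) = cmp g f1 + cmp g f2
}.
Arguments cmp {p a b c}.
Arguments idm {p}.

Record additive_cat := AdditiveCat {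
  PA :> preadditive;
  zero_ob : PA;
  zero_ob_id : idm zero_ob = 0 :> Mor zero_ob zero_ob;
  bip : PA -> PA -> PA;
  bip_inl : forall a b, Mor a (bip a b);
  bip_inr : forall a b, Mor b (bip a b);
  bip_pl : forall a b, Mor (bip a b) a;
  bip_pr : forall a b, Mor (bip a b) b;
  bip_pl_inl : forall a b, cmp (bip_pl a b) (bip_inl a b) = idm a;
  bip_pr_inr : forall a b, cmp (bip_pr a b) (bip_inr a b) = idm b;
  bip_pl_inr : forall a b, cmp (bip_pl a b) (bip_inr a b) = 0;
  bip_pr_inl : forall a b, cmp (bip_pr a b) (bip_inl a b) = 0;
  bip_sum : forall a b, cmp (bip_inl a b) (bip_pl a b)
                        + cmp (bip_inr a b) (bip_pr a b) = idm (bip a b)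
}.
Arguments bip_inl {a0 a b}.
Arguments bip_inr {a0 a b}.
Arguments bip_pl {a0 a b}.
Arguments bip_pr {a0 a b}.

Section Exactness.
Variable C : preadditive.

Definition weak_cokernel (a b c : C) (f : Mor a b) (g : Mor b c) : Prop :=
  cmp g f = 0 /\
  forall (d : C) (h : Mor b d), cmp h f = 0 -> exists k : Mor c d, h = cmp k g.

Definition is_cokernel (a b c : C) (f : Mor a b) (g : Mor b c) : Prop :=
  cmp g f = 0 /\
  forall (d : C) (h : Mor b d), cmp h f = 0 -> exists! k : Mor c d, h = cmp k g.

(* The sequence  X0 --x0--> X 1 --x 1--> X 2 --> ... --x (n-1)--> X n --y--> Y
   is right n-exact (n >= 1): x 1, ..., x (n-1) are weak cokernels of their
   predecessor (x 1 of x0) and y is a cokernel of its predecessor.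
   Only x 1, ..., x (n-1) are used; for n = 0 the predicate is False. *)
Definition right_nexact (n : nat) (X : nat -> C) (X0 Y : C)
    (x0 : Mor X0 (X 1)) (x : forall i, Mor (X i) (X i.+1)) : Mor (X n) Y -> Prop :=
  match n as n0 return Mor (X n0) Y -> Prop with
  | 0 => fun _ => False
  | 1 => fun y => is_cokernel x0 y
  | m.+2 => fun y =>
      weak_cokernel x0 (x 1) /\
      (forall k, (1 <= k)%N -> (k <= m)%N -> weak_cokernel (x k) (x k.+1)) /\
      is_cokernel (x m.+1) y
  end.
End Exactness.
Arguments right_nexact {C} n X {X0 Y}.

Section PushoutSeq.
Variable C : additive_cat.
Variables (A B : nat -> C) (f : forall i, Mor (A i) (A i.+1))
          (g : forall i, Mor (B i) (B i.+1)) (h : forall i, Mor (A i) (B i)).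

Definition pobj (i : nat) : C := bip (A i.+1) (B i).

Definition pd0 : Mor (A 1%N) (pobj 1%N) :=
  cmp bip_inl (- f 1%N) + cmp bip_inr (h 1%N).

Definition pd (i : nat) : Mor (pobj i) (pobj i.+1) :=
  cmp bip_inl (cmp (- f i.+1) bip_pl)
  + cmp bip_inr (cmp (h i.+1) bip_pl)
  + cmp bip_inr (cmp (g i) bip_pr).

Definition pdlast (n : nat) : Mor (pobj n) (B n.+1) :=
  cmp (h n.+1) bip_pl + cmp (g n) bip_pr.
End PushoutSeq.

(* Main.v *)
Require Import Defs.
From mathcomp Require Import all_boot ssralg.
From mathcomp Require Import zify.
Import GRing.Theory.
Local Open Scope ring_scope.
Set Implicit Arguments. Unset Strict Implicit. Unset Printing Implicit Defensive.

Section Gen.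
Variable C : additive_cat.

Lemma comp0l (a b c : C) (f : Mor a b) : cmp (0 : Mor b c) f = 0.
Proof.
have H := comp_addl (0 : Mor b c) 0 f; rewrite addr0 in H.
by apply: (addrI (cmp (0 : Mor b c) f)); rewrite addr0 -H.
Qed.

Lemma comp0r (a b c : C) (g : Mor b c) : cmp g (0 : Mor a b) = 0.
Proof.
have H := comp_addr g (0 : Mor a b) 0; rewrite addr0 in H.
by apply: (addrI (cmp g (0 : Mor a b))); rewrite addr0 -H.
Qed.

Lemma compNl (a b c : C) (g : Mor b c) (f : Mor a b) : cmp (- g) f = - cmp g f.
Proof. by apply: (addrI (cmp g f)); rewrite -comp_addl !subrr comp0l. Qed.

Lemma compNr (a b c : C) (g : Mor b c) (f : Mor a b) : cmp g (- f) = - cmp g f.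
Proof. by apply: (addrI (cmp g f)); rewrite -comp_addr !subrr comp0r. Qed.

Lemma compBl (a b c : C) (g1 g2 : Mor b c) (f : Mor a b) :
  cmp (g1 - g2) f = cmp g1 f - cmp g2 f.
Proof. by rewrite comp_addl compNl. Qed.

Lemma bip_ext_out (a b d : C) (p q : Mor (bip a b) d) :
  cmp p bip_inl = cmp q bip_inl -> cmp p bip_inr = cmp q bip_inr -> p = q.
Proof.
move=> H1 H2; rewrite -(comp_id_r p) -(comp_id_r q) -bip_sum !comp_addr.
by rewrite !comp_assoc H1 H2.
Qed.

Lemma zero_out (a b d : C) (p : Mor (bip a b) d) :
  cmp p bip_inl = 0 -> cmp p bip_inr = 0 -> p = 0.
Proof. by move=> H1 H2; apply: bip_ext_out; rewrite ?comp0l. Qed.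

Lemma copair_inl (a b d : C) (u : Mor a d) (v : Mor b d) :
  cmp (cmp u bip_pl + cmp v bip_pr) bip_inl = u.
Proof.
by rewrite comp_addl -!comp_assoc bip_pl_inl bip_pr_inl comp_id_r comp0r addr0.
Qed.

Lemma copair_inr (a b d : C) (u : Mor a d) (v : Mor b d) :
  cmp (cmp u bip_pl + cmp v bip_pr) bip_inr = v.
Proof.
by rewrite comp_addl -!comp_assoc bip_pl_inr bip_pr_inr comp_id_r comp0r add0r.
Qed.

Lemma coker_epi (a b c d : C) (f : Mor a b) (g : Mor b c) (x y : Mor c d) :
  is_cokernel f g -> cmp x g = cmp y g -> x = y.
Proof.
case=> H0 Hu Hxy.
have H1 : cmp (cmp x g) f = 0 by rewrite -comp_assoc H0 comp0r.
have [k [_ Hk]] := Hu _ (cmp x g) H1.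
by rewrite -(Hk x erefl) -(Hk y Hxy).
Qed.

Lemma coker_weak (a b c : C) (f : Mor a b) (g : Mor b c) :
  is_cokernel f g -> weak_cokernel f g.
Proof.
case=> H0 Hu; split => // d k Hk; have [k' [Hk' _]] := Hu _ k Hk; by exists k'.
Qed.

Variables (A B : nat -> C) (f : forall i, Mor (A i) (A i.+1))
          (g : forall i, Mor (B i) (B i.+1)) (h : forall i, Mor (A i) (B i)).

Lemma pd_inl i : cmp (pd f g h i) bip_inl = cmp bip_inl (- f i.+1) + cmp bip_inr (h i.+1).
Proof.
rewrite /pd !comp_addl -!comp_assoc bip_pl_inl bip_pr_inl !comp_id_r !comp0r.
by rewrite addr0.
Qed.

Lemma pd_inr i : cmp (pd f g h i) bip_inr = cmp bip_inr (g i).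
Proof.
rewrite /pd !comp_addl -!comp_assoc bip_pl_inr bip_pr_inr !comp_id_r !comp0r.
by rewrite !add0r.
Qed.

Lemma pd0E : pd0 f h = cmp (pd f g h 0) bip_inl.
Proof. by rewrite pd_inl. Qed.

Lemma pdlast_inl i : cmp (pdlast g h i) bip_inl = h i.+1.
Proof. exact: copair_inl. Qed.

Lemma pdlast_inr i : cmp (pdlast g h i) bip_inr = g i.
Proof. exact: copair_inr. Qed.

Lemma psi_pd_inl i (D : C) (p : Mor (pobj A B i.+1) D) :
  cmp (cmp p (pd f g h i)) bip_inl =
  - cmp (cmp p bip_inl) (f i.+1) + cmp (cmp p bip_inr) (h i.+1).
Proof. by rewrite -comp_assoc pd_inl comp_addr !comp_assoc compNr. Qed.

Lemma psi_pd_inr i (D : C) (p : Mor (pobj A B i.+1) D) :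
  cmp (cmp p (pd f g h i)) bip_inr = cmp (cmp p bip_inr) (g i).
Proof. by rewrite -comp_assoc pd_inr comp_assoc. Qed.

Lemma psi_pd0 (D : C) (p : Mor (pobj A B 1) D) :
  cmp p (pd0 f h) =
  - cmp (cmp p bip_inl) (f 1) + cmp (cmp p bip_inr) (h 1).
Proof. by rewrite /pd0 comp_addr !comp_assoc compNr. Qed.

Lemma comp_inl i :
  cmp (f i.+2) (f i.+1) = 0 -> cmp (h i.+2) (f i.+1) = cmp (g i.+1) (h i.+1) ->
  cmp (cmp (pd f g h i.+1) (pd f g h i)) bip_inl = 0.
Proof.
move=> Hff Hc; rewrite psi_pd_inl pd_inl pd_inr comp_addl -!comp_assoc compNl.
by rewrite Hff oppr0 comp0r add0r Hc addNr.
Qed.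

Lemma comp_inr i :
  cmp (g i.+1) (g i) = 0 ->
  cmp (cmp (pd f g h i.+1) (pd f g h i)) bip_inr = 0.
Proof. by move=> Hgg; rewrite psi_pd_inr pd_inr -comp_assoc Hgg comp0r. Qed.

Lemma wc_core i (X D : C) (gp : Mor X (B i.+1)) (p : Mor (pobj A B i.+1) D) :
  weak_cokernel (f i.+1) (f i.+2) -> weak_cokernel gp (g i.+1) ->
  cmp (h i.+2) (f i.+1) = cmp (g i.+1) (h i.+1) ->
  cmp (cmp p bip_inr) gp = 0 ->
  cmp (cmp p bip_inl) (f i.+1) = cmp (cmp p bip_inr) (h i.+1) ->
  exists k, p = cmp k (pd f g h i.+1).
Proof.
move=> [_ Hf] [_ Hg] Hc Hv Huv.
have [v' Hv'] := Hg _ _ Hv.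
have [w Hw] : exists w, cmp p bip_inl - cmp v' (h i.+2) = cmp w (f i.+2).
  apply: Hf; rewrite compBl -[cmp (cmp v' _) _]comp_assoc Hc comp_assoc -Hv' Huv.
  by rewrite subrr.
exists (cmp (- w) bip_pl + cmp v' bip_pr); apply: bip_ext_out.
  rewrite -comp_assoc pd_inl comp_addr !comp_assoc copair_inl copair_inr.
  by rewrite compNl compNr opprK -Hw subrK.
by rewrite -comp_assoc pd_inr comp_assoc copair_inr.
Qed.

Lemma ck_core i (X Y D : C) (fp : Mor Y (A i.+1)) (gp : Mor X (B i.+1))
   (p : Mor (pobj A B i.+1) D) :
  is_cokernel fp (f i.+1) -> is_cokernel gp (g i.+1) ->
  cmp (h i.+2) (f i.+1) = cmp (g i.+1) (h i.+1) ->
  cmp (cmp p bip_inr) gp = 0 ->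
  cmp (cmp p bip_inl) (f i.+1) = cmp (cmp p bip_inr) (h i.+1) ->
  exists! k, p = cmp k (pdlast g h i.+1).
Proof.
move=> Hf Hg Hc Hv Huv.
have Hg' := Hg; case: Hg' => _ Hgu.
have [k [Hk Hku]] := Hgu _ _ Hv.
have Hu : cmp p bip_inl = cmp k (h i.+2).
  apply: (coker_epi Hf); rewrite -[cmp (cmp k _) _]comp_assoc Hc comp_assoc -Hk Huv //.
exists k; split.
  apply: bip_ext_out; rewrite -comp_assoc ?pdlast_inl ?pdlast_inr //.
move=> k' Hk'; apply: Hku; rewrite Hk' -comp_assoc pdlast_inr //.
Qed.

End Gen.


Theorem lemma2p7 (C : additive_cat) (n : nat) (A B : nat -> C)
    (f : forall i, Mor (A i) (A i.+1))
    (g0 : Mor (A 0%N) (B 1%N)) (g : forall i, Mor (B i) (B i.+1))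
    (h : forall i, Mor (A i) (B i)) :
  (1 <= n)%N ->
  g0 = cmp (h 1%N) (f 0%N) ->
  (forall i, (1 <= i <= n)%N -> cmp (h i.+1) (f i) = cmp (g i) (h i)) ->
  right_nexact n A (f 0%N) f (f n) ->
  right_nexact n B g0 g (g n) ->
  right_nexact n (pobj A B) (pd0 f h) (pd f g h) (pdlast g h n).
Proof.
move=> Hn Hg0 Hc HA HB.
have uv : forall (D : C) (p : Mor (pobj A B 1) D), cmp p (pd0 f h) = 0 ->
    cmp (cmp p bip_inl) (f 1%N) = cmp (cmp p bip_inr) (h 1%N).
  move=> D p; rewrite psi_pd0 => /eqP; rewrite addrC subr_eq0 => /eqP ->//.
have uvi : forall i (D : C) (p : Mor (pobj A B i.+1) D), cmp p (pd f g h i) = 0 ->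
    cmp (cmp p bip_inl) (f i.+1) = cmp (cmp p bip_inr) (h i.+1)
    /\ cmp (cmp p bip_inr) (g i) = 0.
  move=> i D p Hp; split.
    have := f_equal (fun q => cmp q bip_inl) Hp; rewrite /= psi_pd_inl comp0l.
    by move/eqP; rewrite addrC subr_eq0 => /eqP ->.
  by have := f_equal (fun q => cmp q bip_inr) Hp; rewrite /= psi_pd_inr comp0l.
case: n Hn Hc HA HB => [|[|m]] // _ Hc HA HB.
  have Hc1 := Hc 1%N isT.
  split.
    by rewrite psi_pd0 pdlast_inl pdlast_inr Hc1 addNr.
  move=> D p Hp; have Huv := uv _ _ Hp.
  have Hv : cmp (cmp p bip_inr) g0 = 0.
    by rewrite Hg0 comp_assoc -Huv -[cmp (cmp _ (f 1%N)) _]comp_assoc HA.1 comp0r.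
  exact: (ck_core (i:=0) HA HB Hc1 Hv Huv).
case: HA => HA0 [HA1 HA2]; case: HB => HB0 [HB1 HB2].
have HwA : forall k, (1 <= k <= m.+1)%N -> weak_cokernel (f k) (f k.+1).
  move=> k /andP [Hk1 Hk2]; case: (ltngtP k m.+1) Hk2 => // [Hlt _|-> _].
    by apply: HA1.
  exact: coker_weak.
have Hcm : forall k, (1 <= k <= m.+2)%N -> cmp (h k.+1) (f k) = cmp (g k) (h k).
  by [].
split; [|split].
- split.
    rewrite (pd0E f g h) comp_assoc comp_inl //.
      exact: (HwA 1%N isT).1.
    exact: Hcm.
  move=> D p Hp; have Huv := uv _ _ Hp.
  have Hv : cmp (cmp p bip_inr) g0 = 0.
    by rewrite Hg0 comp_assoc -Huv -[cmp (cmp _ (f 1%N)) _]comp_assoc HA0.1 comp0r.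
  exact: (wc_core (i:=0) (HwA 1%N isT) HB0 (Hcm 1%N isT) Hv Huv).
- move=> k Hk1 Hkm.
  have Hk' : (1 <= k.+1 <= m.+1)%N by lia.
  have Hk'' : (1 <= k.+1 <= m.+2)%N by lia.
  split.
    apply: zero_out.
      by apply: comp_inl; [exact: (HwA _ Hk').1 | exact: Hcm].
    by apply: comp_inr; exact: (HB1 k Hk1 Hkm).1.
  move=> D p Hp; have [Huv Hv] := uvi _ _ _ Hp.
  exact: (wc_core (HwA _ Hk') (HB1 k Hk1 Hkm) (Hcm _ Hk'') Hv Huv).
- split.
    apply: zero_out.
    by rewrite psi_pd_inl pdlast_inl pdlast_inr (Hcm m.+2 ltac:(lia)) addNr.
    by rewrite psi_pd_inr pdlast_inr HB2.1.
  move=> D p Hp; have [Huv Hv] := uvi _ _ _ Hp.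
  exact: (ck_core HA2 HB2 (Hcm m.+2 ltac:(lia)) Hv Huv).
Qed.
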